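(* Let $T\in(\mathbb{C}^n)^{\otimes3}$ be an $r$-diagonalisable symmetric tensor, $T=\sum_{i=1}^ru_i^{\otimes3}$ with the $u_i$ linearly independent, with $\kappa(T)\le B$, and let $T'\in(\mathbb{C}^n)^{\otimes3}$ satisfy $\|T-T'\|_F\le\delta$. Let $P\in\mathbb{C}^{n\times r}$ be a semi-unitary matrix whose column span is $\mathrm{span}\{u_1,\dots,u_r\}$, and let $P'\in\mathbb{C}^{n\times r}$ satisfy $\|P-P'\|\le\varepsilon_1<1$. Let $S=(\overline P\otimes\overline P\otimes\overline P).T$ and $S'=(\overline{P'}\otimes\overline{P'}\otimes\overline{P'}).T'$. Then $$\|S-S'\|_F\le 7\varepsilon_1r^{7/2}B^{3/2}+8\delta r^{3/2}.$$
   Context: $\kappa(T)=\|U\|_F^2+\|U^\dagger\|_F^2$ where $U$ has rows $u_1,\dots,u_r$ and $U^\dagger$ is the Moore–Penrose pseudoinverse (independent of the decomposition). Semi-unitary means $P^*P=I_r$; $\overline P$ is the entrywise conjugate. $\|P-P'\|$ is the operator norm; $\|\cdot\|_F$ on tensors is the Frobenius norm. For $M\in\mathbb{C}^{n\times r}$, $\big((M\otimes M\otimes M).T\big)_{i_1i_2i_3}=\sum_{j_1,j_2,j_3=1}^nM_{j_1i_1}M_{j_2i_2}M_{j_3i_3}T_{j_1j_2j_3}$. *)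

(* Defs.v *)
From HB Require Import structures.
From mathcomp Require Import all_boot all_order all_algebra.
From mathcomp Require Import complex.
From mathcomp Require Import boolp classical_sets reals.
Set Implicit Arguments. Unset Strict Implicit. Unset Printing Implicit Defensive.
Import Order.TTheory GRing.Theory Num.Theory.
Local Open Scope ring_scope.
Local Open Scope classical_set_scope.

Definition sqmod (R : realType) (z : R[i]) : R := complex.Re z ^+ 2 + complex.Im z ^+ 2.

Definition cconjmx (R : realType) m n (A : 'M[R[i]]_(m, n)) : 'M[R[i]]_(m, n) :=
  map_mx (@conjc R) A.

Definition adjmx (R : realType) m n (A : 'M[R[i]]_(m, n)) : 'M[R[i]]_(n, m) :=
  (cconjmx A)^T.

Definition frobmx (R : realType) m n (A : 'M[R[i]]_(m, n)) : R :=
  Num.sqrt (\sum_(i < m) \sum_(j < n) sqmod (A i j)).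

Definition vnorm (R : realType) m (x : 'cV[R[i]]_m) : R := frobmx x.

Definition opnorm (R : realType) m n (A : 'M[R[i]]_(m, n)) : R :=
  sup [set vnorm (A *m x) | x in [set x : 'cV[R[i]]_n | vnorm x = 1]].

Definition tensor3 (R : realType) (n : nat) := 'I_n -> 'I_n -> 'I_n -> R[i].

Definition tfrob (R : realType) n (T : tensor3 R n) : R :=
  Num.sqrt (\sum_(i < n) \sum_(j < n) \sum_(k < n) sqmod (T i j k)).

Definition tsub (R : realType) n (T T' : tensor3 R n) : tensor3 R n :=
  fun i j k => T i j k - T' i j k.

(* sum_{i<r} u_i^{⊗3}, where u_i is the i-th row of U *)
Definition cubes_sum (R : realType) r n (U : 'M[R[i]]_(r, n)) : tensor3 R n :=
  fun j1 j2 j3 => \sum_(i < r) U i j1 * U i j2 * U i j3.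

Definition mlmul (R : realType) n r (M : 'M[R[i]]_(n, r)) (T : tensor3 R n)
  : tensor3 R r :=
  fun i1 i2 i3 => \sum_(j1 < n) \sum_(j2 < n) \sum_(j3 < n)
     M j1 i1 * M j2 i2 * M j3 i3 * T j1 j2 j3.

Definition is_pinv (R : realType) m n (U : 'M[R[i]]_(m, n)) (X : 'M[R[i]]_(n, m))
  : Prop :=
  [/\ U *m X *m U = U, X *m U *m X = X,
      adjmx (U *m X) = U *m X & adjmx (X *m U) = X *m U].

Definition kappa_of (R : realType) r n (U : 'M[R[i]]_(r, n)) (Ud : 'M[R[i]]_(n, r))
  : R := frobmx U ^+ 2 + frobmx Ud ^+ 2.

Definition semi_unitary (R : realType) n r (P : 'M[R[i]]_(n, r)) : Prop :=
  adjmx P *m P = 1%:M.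

(* Main.v *)
Require Import Defs.
From HB Require Import structures.
From mathcomp Require Import all_boot all_order all_algebra.
From mathcomp Require Import complex.
From mathcomp Require Import boolp classical_sets reals.
From mathcomp Require Import ring lra.
Import Order.TTheory GRing.Theory Num.Theory.
Import ComplexField.Normc.
Local Open Scope ring_scope.

Set Implicit Arguments. Unset Strict Implicit. Unset Printing Implicit Defensive.
Section S.
Variable R : realType.

Lemma sqmodE (z : R[i]) : sqmod z = normc z ^+ 2.
Proof. by case: z => a b; rewrite /sqmod /= sqr_sqrtr // addr_ge0 // sqr_ge0. Qed.

Lemma sqmod_ge0 (z : R[i]) : 0 <= sqmod z.
Proof. by rewrite sqmodE sqr_ge0. Qed.

Lemma sqmodM (a b : R[i]) : sqmod (a * b) = sqmod a * sqmod b.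
Proof. by rewrite !sqmodE normcM exprMn. Qed.

Lemma sqmodN (a : R[i]) : sqmod (- a) = sqmod a.
Proof. by rewrite !sqmodE normcN. Qed.

Lemma sqmodJ (a : R[i]) : sqmod (a^*)%C = sqmod a.
Proof. by case: a => x y; rewrite /sqmod /= sqrrN. Qed.

Lemma sqmodB2 (a b : R[i]) : sqmod (a - b) <= 2%:R * sqmod a + 2%:R * sqmod b.
Proof. case: a => x y; case: b => u v; rewrite /sqmod /=; have := sqr_ge0 (x + u); have := sqr_ge0 (y + v); nra. Qed.

Lemma conjM_sqmod (z : R[i]) : (z^* * z)%C = ((sqmod z)%:C)%C.
Proof. case: z => a b; apply/eqP; rewrite eq_complex /sqmod /=; apply/andP; split; apply/eqP; ring. Qed.

Lemma sqmod1 : sqmod (1 : R[i]) = 1.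
Proof. by rewrite /sqmod /= expr1n expr0n /= addr0. Qed.
Lemma sqmod0 : sqmod (0 : R[i]) = 0.
Proof. by rewrite /sqmod /= expr0n /= addr0. Qed.

Lemma normc_ge0 (z : R[i]) : 0 <= normc z.
Proof. by case: z => a b /=; rewrite sqrtr_ge0. Qed.

Lemma normc_sum (I : finType) (f : I -> R[i]) :
  normc (\sum_i f i) <= \sum_i normc (f i).
Proof.
elim/big_ind2: _ => //; first by rewrite normc0.
by move=> x1 x2 y1 y2 h1 h2; apply: le_trans (le_normcD _ _) _; apply: lerD.
Qed.

Lemma CSr (I : finType) (a b : I -> R) :
  (\sum_i a i * b i) ^+ 2 <= (\sum_i a i ^+ 2) * (\sum_i b i ^+ 2).
Proof.
have H : 0 <= \sum_k \sum_l (a k * b l - a l * b k) ^+ 2.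
  by apply: sumr_ge0 => k _; apply: sumr_ge0 => l _; apply: sqr_ge0.
have E : \sum_k \sum_l (a k * b l - a l * b k) ^+ 2 =
   2%:R * ((\sum_i a i ^+ 2) * (\sum_i b i ^+ 2) - (\sum_i a i * b i) ^+ 2).
  have E1 : forall k l, (a k * b l - a l * b k) ^+ 2 =
     a k ^+ 2 * b l ^+ 2 + b k ^+ 2 * a l ^+ 2 - 2%:R * ((a k * b k) * (a l * b l)).
    by move=> k l; ring.
  under eq_bigr => k _ do under eq_bigr => l _ do rewrite E1.
  under eq_bigr => k _ do rewrite sumrB big_split /=.
  rewrite sumrB big_split /= -!big_distrlr /=.
  under [X in _ - X = _]eq_bigr => i _ do rewrite -mulr_sumr.
  rewrite -mulr_sumr -big_distrlr /=.
  rewrite [(\sum_i b i ^+ 2) * _]mulrC; ring.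
move: H; rewrite E pmulr_rge0 ?ltr0n // subr_ge0 //.
Qed.

Lemma CSc (I : finType) (a b : I -> R[i]) :
  sqmod (\sum_i a i * b i) <= (\sum_i sqmod (a i)) * (\sum_i sqmod (b i)).
Proof.
rewrite sqmodE.
have h1 : normc (\sum_i a i * b i) <= \sum_i normc (a i) * normc (b i).
  by under [X in _ <= X]eq_bigr => i _ do rewrite -normcM; apply: normc_sum.
have h2 : normc (\sum_i a i * b i) ^+ 2 <= (\sum_i normc (a i) * normc (b i)) ^+ 2.
  by rewrite !expr2; apply: ler_pM => //; apply: normc_ge0.
apply: le_trans h2 _.
under [X in _ <= X * _]eq_bigr => i _ do rewrite sqmodE.
under [X in _ <= _ * X]eq_bigr => i _ do rewrite sqmodE.
exact: CSr.
Qed.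


Lemma sqrt_le_of_sq (a b : R) : 0 <= b -> a <= b ^+ 2 -> Num.sqrt a <= b.
Proof.
move=> hb hab; apply: le_trans (ler_wsqrtr hab) _.
by rewrite sqrtr_sqr ger0_norm.
Qed.

Lemma sq_le_of (a b : R) : 0 <= a -> 0 <= b -> a ^+ 2 <= b ^+ 2 -> a <= b.
Proof. move=> ha hb h; nra. Qed.

Lemma Mink (I : finType) (x y : I -> R[i]) :
  Num.sqrt (\sum_i sqmod (x i + y i)) <=
  Num.sqrt (\sum_i sqmod (x i)) + Num.sqrt (\sum_i sqmod (y i)).
Proof.
set A := \sum_i sqmod (x i); set B := \sum_i sqmod (y i).
have hA : 0 <= A by apply: sumr_ge0 => i _; apply: sqmod_ge0.
have hB : 0 <= B by apply: sumr_ge0 => i _; apply: sqmod_ge0.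
apply: sqrt_le_of_sq; first by rewrite addr_ge0 ?sqrtr_ge0.
have h1 : \sum_i sqmod (x i + y i) <= \sum_i (normc (x i) + normc (y i)) ^+ 2.
  apply: ler_sum => i _; rewrite sqmodE !expr2.
  apply: ler_pM; rewrite ?normc_ge0 //; exact: le_normcD.
apply: le_trans h1 _.
have h2 : \sum_i (normc (x i) + normc (y i)) ^+ 2 =
   A + B + 2%:R * \sum_i normc (x i) * normc (y i).
  rewrite /A /B mulr_sumr -!big_split /=; apply: eq_bigr => i _.
  rewrite !sqmodE; ring.
rewrite h2.
have h3 : \sum_i normc (x i) * normc (y i) <= Num.sqrt A * Num.sqrt B.
  apply: sq_le_of; first by apply: sumr_ge0 => i _; apply: mulr_ge0; apply: normc_ge0.
    by apply: mulr_ge0; apply: sqrtr_ge0.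
  eapply le_trans; first exact: CSr.
  rewrite exprMn !sqr_sqrtr // /A /B.
  by under [X in X * _ <= _]eq_bigr => i _ do rewrite -sqmodE;
     under [X in _ * X <= _]eq_bigr => i _ do rewrite -sqmodE.
have hA2 := sqr_sqrtr hA; have hB2 := sqr_sqrtr hB.
have := sqrtr_ge0 A; have := sqrtr_ge0 B.
nra.
Qed.

Lemma sum3E (n : nat) (F : 'I_n -> 'I_n -> 'I_n -> R[i]) :
  \sum_i \sum_j \sum_k F i j k = \sum_(p : 'I_n * 'I_n * 'I_n) F p.1.1 p.1.2 p.2.
Proof. by rewrite pair_bigA /= pair_bigA. Qed.

Lemma sum3Er (n : nat) (F : 'I_n -> 'I_n -> 'I_n -> R) :
  \sum_i \sum_j \sum_k F i j k = \sum_(p : 'I_n * 'I_n * 'I_n) F p.1.1 p.1.2 p.2.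
Proof. by rewrite pair_bigA /= pair_bigA. Qed.

Lemma sum3M (n : nat) (f g h : 'I_n -> R) :
  \sum_i \sum_j \sum_k f i * g j * h k = (\sum_i f i) * (\sum_j g j) * (\sum_k h k).
Proof.
rewrite big_distrlr big_distrl /=; apply: eq_bigr => i _.
rewrite big_distrl /=; apply: eq_bigr => j _.
by rewrite big_distrr.
Qed.


Definition tf2 n (T : tensor3 R n) : R :=
  \sum_i \sum_j \sum_k sqmod (T i j k).
Definition fm2 m n (A : 'M[R[i]]_(m, n)) : R := \sum_i \sum_j sqmod (A i j).
Definition mlmul3 n r (A B C : 'M[R[i]]_(n, r)) (T : tensor3 R n) : tensor3 R r :=
  fun i1 i2 i3 => \sum_(j1 < n) \sum_(j2 < n) \sum_(j3 < n)
     A j1 i1 * B j2 i2 * C j3 i3 * T j1 j2 j3.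

Lemma tf2_ge0 n (T : tensor3 R n) : 0 <= tf2 T.
Proof. by do 3 (apply: sumr_ge0 => ? _); apply: sqmod_ge0. Qed.
Lemma fm2_ge0 m n (A : 'M[R[i]]_(m, n)) : 0 <= fm2 A.
Proof. by do 2 (apply: sumr_ge0 => ? _); apply: sqmod_ge0. Qed.

Lemma ML2 n r (A B C : 'M[R[i]]_(n, r)) (T : tensor3 R n) :
  tf2 (mlmul3 A B C T) <= fm2 A * fm2 B * fm2 C * tf2 T.
Proof.
pose a i := \sum_j sqmod (A j i); pose b i := \sum_j sqmod (B j i);
pose c i := \sum_j sqmod (C j i).
have pt : forall i1 i2 i3, sqmod (mlmul3 A B C T i1 i2 i3) <= a i1 * b i2 * c i3 * tf2 T.
  move=> i1 i2 i3; rewrite /mlmul3 sum3E.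
  eapply le_trans; first exact: (CSc (fun p : 'I_n * 'I_n * 'I_n => A p.1.1 i1 * B p.1.2 i2 * C p.2 i3)
                                (fun p => T p.1.1 p.1.2 p.2)).
  rewrite /tf2 (sum3Er (fun i j k => sqmod (T i j k))).
  rewrite -(sum3Er (fun j1 j2 j3 => sqmod (A j1 i1 * B j2 i2 * C j3 i3))).
  under eq_bigr => j1 _ do under eq_bigr => j2 _ do under eq_bigr => j3 _ do rewrite !sqmodM.
  by rewrite sum3M.
have e : forall m (M : 'M[R[i]]_(m, r)), \sum_i \sum_j sqmod (M j i) = fm2 M.
  by move=> m M; rewrite /fm2 exchange_big.
rewrite -!e -/(a) -/(b) -/(c).
apply: le_trans (_ : \sum_i1 \sum_i2 \sum_i3 a i1 * b i2 * c i3 * tf2 T <= _).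
  by rewrite /tf2; do 3 (apply: ler_sum => ? _); apply: pt.
rewrite -sum3M !mulr_suml; apply: ler_sum => i _; rewrite mulr_suml; apply: ler_sum => j _.
rewrite mulr_suml; apply: ler_sum => k _; exact: lexx.
Qed.


Lemma ML n r (A B C : 'M[R[i]]_(n, r)) (T : tensor3 R n) :
  tfrob (mlmul3 A B C T) <= frobmx A * frobmx B * frobmx C * tfrob T.
Proof.
rewrite /tfrob /frobmx -/(tf2 _) -/(tf2 T) -!/(fm2 _).
rewrite -!sqrtrM ?mulr_ge0 ?fm2_ge0 //.
exact: ler_wsqrtr (ML2 _ _ _ _).
Qed.

Definition tadd n (X Y : tensor3 R n) : tensor3 R n := fun i j k => X i j k + Y i j k.

Lemma tfrob_add n (X Y : tensor3 R n) : tfrob (tadd X Y) <= tfrob X + tfrob Y.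
Proof.
rewrite /tfrob /tadd !sum3Er.
exact: (Mink (fun p : 'I_n * 'I_n * 'I_n => X p.1.1 p.1.2 p.2) (fun p => Y p.1.1 p.1.2 p.2)).
Qed.

Lemma tfrob_ext n (X Y : tensor3 R n) : (forall i j k, X i j k = Y i j k) -> tfrob X = tfrob Y.
Proof.
move=> h; rewrite /tfrob; congr Num.sqrt; do 3 (apply: eq_bigr => ? _); by rewrite h.
Qed.

Lemma tfrob_sub n (X Y : tensor3 R n) : tfrob (tsub X Y) <= tfrob X + tfrob Y.
Proof.
have -> : tfrob Y = tfrob (fun i j k => - Y i j k).
  by rewrite /tfrob; congr Num.sqrt; do 3 (apply: eq_bigr => ? _); rewrite sqmodN.
rewrite (@tfrob_ext _ _ (tadd X (fun i j k => - Y i j k))) //; exact: tfrob_add.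
Qed.

Lemma tfrob_ge0 n (X : tensor3 R n) : 0 <= tfrob X.
Proof. exact: sqrtr_ge0. Qed.
Lemma frobmx_ge0 m n (X : 'M[R[i]]_(m, n)) : 0 <= frobmx X.
Proof. exact: sqrtr_ge0. Qed.

Lemma vnorm2 m (x : 'cV[R[i]]_m) : vnorm x ^+ 2 = \sum_i sqmod (x i 0).
Proof.
rewrite /vnorm /frobmx sqr_sqrtr; last by do 2 (apply: sumr_ge0 => ? _); apply: sqmod_ge0.
by apply: eq_bigr => i _; rewrite big_ord1.
Qed.

Lemma vnorm_mul_le n r (D : 'M[R[i]]_(n, r)) x : vnorm x = 1 -> vnorm (D *m x) <= frobmx D.
Proof.
move=> hx.
have h1 : \sum_j sqmod (x j 0) = 1 by rewrite -vnorm2 hx expr1n.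
rewrite /vnorm /frobmx; apply: ler_wsqrtr.
apply: ler_sum => i _; rewrite big_ord1 mxE.
eapply le_trans; first exact: (CSc (fun j => D i j) (fun j => x j 0)).
by rewrite h1 mulr1.
Qed.

Lemma opnorm_ub n r (D : 'M[R[i]]_(n, r)) x : vnorm x = 1 -> vnorm (D *m x) <= opnorm D.
Proof.
move=> hx; rewrite /opnorm; apply: ub_le_sup.
  exists (frobmx D) => y [z hz <-]; exact: vnorm_mul_le.
by exists x.
Qed.

Lemma vnorm_delta r (j : 'I_r) : vnorm (delta_mx j 0 : 'cV[R[i]]_r) = 1.
Proof.
have h : vnorm (delta_mx j 0 : 'cV[R[i]]_r) ^+ 2 = 1.
  rewrite vnorm2 (bigD1 j) //= big1 => [|i hi]; rewrite mxE.
    by rewrite !eqxx /= sqmod1 addr0.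
  by rewrite (negbTE hi) /= sqmod0.
have h0 : 0 <= vnorm (delta_mx j 0 : 'cV[R[i]]_r) by apply: sqrtr_ge0.
nra.
Qed.

Lemma fm2_op n r (D : 'M[R[i]]_(n, r)) e : opnorm D <= e -> fm2 D <= r%:R * e ^+ 2.
Proof.
move=> he; rewrite /fm2 exchange_big /=.
have -> : r%:R * e ^+ 2 = \sum_(j < r) e ^+ 2 by rewrite sumr_const card_ord mulr_natl.
apply: ler_sum => j _.
have h := opnorm_ub D (vnorm_delta j).
have h0 : 0 <= vnorm (D *m delta_mx j 0) by apply: sqrtr_ge0.
have -> : \sum_i sqmod (D i j) = vnorm (D *m delta_mx j 0) ^+ 2.
  by rewrite vnorm2 -colE; apply: eq_bigr => i _; rewrite mxE.
have h2 : vnorm (D *m delta_mx j 0) <= e by apply: le_trans he.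
rewrite !expr2; apply: ler_pM => //.
Qed.


Lemma fm2_su n r (P : 'M[R[i]]_(n, r)) : semi_unitary P -> fm2 P = r%:R.
Proof.
rewrite /semi_unitary => hP; rewrite /fm2 exchange_big /=.
have h : forall j, \sum_i sqmod (P i j) = 1.
  move=> j; have := congr1 (fun M : 'M[R[i]]_r => M j j) hP; rewrite !mxE eqxx /=.
  under eq_bigr => i _ do rewrite /adjmx /cconjmx !mxE conjM_sqmod.
  rewrite -raddf_sum /= => e. by apply: (@complexI R).
under eq_bigr => j _ do rewrite h.
by rewrite sumr_const card_ord.
Qed.


Lemma fm2J m n (M : 'M[R[i]]_(m, n)) : fm2 (cconjmx M) = fm2 M.
Proof. by rewrite /fm2; do 2 (apply: eq_bigr => ? _); rewrite mxE sqmodJ. Qed.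

Definition Idt r : tensor3 R r := fun a b c => if (a == b) && (b == c) then 1 else 0.
Arguments Idt : clear implicits.

Lemma sum_ifE (V : nmodType) (I : finType) (a : I) (F : I -> V) :
  \sum_c (if a == c then F c else 0) = F a.
Proof.
rewrite (bigD1 a) //= eqxx big1 ?addr0 // => c hc; by rewrite eq_sym (negbTE hc).
Qed.

Lemma tf2_Idt r : tf2 (Idt r) = r%:R.
Proof.
rewrite /tf2 /Idt.
have h : forall (cnd : bool), sqmod (if cnd then 1 else 0 : R[i]) = if cnd then 1 else 0.
  by case; rewrite ?sqmod1 ?sqmod0.
under eq_bigr => a _ do under eq_bigr => b _ do under eq_bigr => c _ do rewrite h.
have e : forall a : 'I_r, \sum_b \sum_c (if (a == b) && (b == c) then 1 else 0 : R) = 1.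
  move=> a; rewrite (bigD1 a) //= [X in _ + X]big1 => [|b hb]; last first.
    by apply: big1 => c _; rewrite eq_sym (negbTE hb).
  rewrite eqxx /= addr0.
  by rewrite (sum_ifE a (fun _ => (1 : R))).
under eq_bigr => a _ do rewrite e.
by rewrite sumr_const card_ord.
Qed.

Lemma cubesE r n (U : 'M[R[i]]_(r, n)) j1 j2 j3 :
  cubes_sum U j1 j2 j3 = mlmul3 U U U (Idt r) j1 j2 j3.
Proof.
rewrite /cubes_sum /mlmul3 /Idt; apply: eq_bigr => a _.
rewrite (bigD1 a) //= [X in _ + X]big1 => [|b hb]; last first.
  by apply: big1 => c _; rewrite eq_sym (negbTE hb) /= mulr0.
rewrite eqxx /= addr0.
have m : forall (x : R[i]) (b : bool), x * (if b then 1 else 0) = if b then x else 0 by move=> x [] ; rewrite ?mulr1 ?mulr0.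
under eq_bigr => c _ do rewrite m.
by rewrite (sum_ifE a (fun c => U a j1 * U a j2 * U c j3)). 
Qed.

Lemma decompE n r (P P' : 'M[R[i]]_(n, r)) (T T' : tensor3 R n) i1 i2 i3 :
  tsub (mlmul3 (cconjmx P) (cconjmx P) (cconjmx P) T)
       (mlmul3 (cconjmx P') (cconjmx P') (cconjmx P') T') i1 i2 i3 =
  tadd (tadd (tadd (mlmul3 (cconjmx P) (cconjmx P) (cconjmx P) (tsub T T'))
                   (mlmul3 (cconjmx (P - P')) (cconjmx P) (cconjmx P) T'))
             (mlmul3 (cconjmx P') (cconjmx (P - P')) (cconjmx P) T'))
       (mlmul3 (cconjmx P') (cconjmx P') (cconjmx (P - P')) T') i1 i2 i3.
Proof.
rewrite /tsub /tadd /mlmul3 !sum3E -sumrB -!big_split; apply: eq_bigr => p _.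
rewrite !mxE !raddfB /=; ring.
Qed.

End S.

Unset Implicit Arguments.
Theorem lemma5p7 (R : realType) (n r : nat)
    (U : 'M[R[i]]_(r, n)) (Ud : 'M[R[i]]_(n, r))
    (T T' : tensor3 R n) (P P' : 'M[R[i]]_(n, r)) (B delta eps1 : R) :
  row_free U ->
  T = cubes_sum U ->
  is_pinv U Ud ->
  kappa_of U Ud <= B ->
  tfrob (tsub T T') <= delta ->
  semi_unitary P ->
  (P^T == U)%MS ->
  opnorm (P - P') <= eps1 -> eps1 < 1 ->
  tfrob (tsub (mlmul (cconjmx P) T) (mlmul (cconjmx P') T'))
    <= 7%:R * eps1 * (r%:R ^+ 3 * Num.sqrt r%:R) * (B * Num.sqrt B)
       + 8%:R * delta * (r%:R * Num.sqrt r%:R).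
Proof.
move=> _ hT _ hk hE hP _ hop he1.
set s := Num.sqrt (r%:R : R).
have s0 : 0 <= s by apply: sqrtr_ge0.
have s2 : s ^+ 2 = r%:R by rewrite sqr_sqrtr // ler0n.
set e := tfrob (tsub T T').
have e0 : 0 <= e by apply: tfrob_ge0.
set p := frobmx (cconjmx P).
have hp : p = s by rewrite /p /frobmx -/(fm2 _) fm2J fm2_su.
set d := frobmx (cconjmx (P - P')).
have d0 : 0 <= d by apply: frobmx_ge0.
have d2 : d ^+ 2 <= r%:R * eps1 ^+ 2.
  rewrite /d /frobmx -/(fm2 _) sqr_sqrtr ?fm2_ge0 // fm2J; exact: fm2_op.
set q := frobmx (cconjmx P').
have q0 : 0 <= q by apply: frobmx_ge0.
have q2 : q ^+ 2 <= 2%:R * r%:R + 2%:R * (r%:R * eps1 ^+ 2).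
  rewrite /q /frobmx -/(fm2 _) sqr_sqrtr ?fm2_ge0 // fm2J.
  have hD := fm2_op hop.
  apply: le_trans (_ : 2%:R * fm2 P + 2%:R * fm2 (P - P') <= _); last first.
    by rewrite (fm2_su hP); apply: lerD => //; rewrite ler_pM2l ?ltr0n.
  rewrite /fm2 !mulr_sumr -big_split /=; apply: ler_sum => i _.
  rewrite !mulr_sumr -big_split /=; apply: ler_sum => j _.
  have -> : P' i j = P i j - (P - P') i j by rewrite !mxE; ring.
  exact: sqmodB2.
set u := frobmx U.
have u0 : 0 <= u by apply: frobmx_ge0.
have u2 : u ^+ 2 <= B.
  apply: le_trans hk; rewrite /kappa_of lerDl; exact: sqr_ge0.
have B0 : 0 <= B by apply: le_trans u2; apply: sqr_ge0.
set be := Num.sqrt B.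
have be0 : 0 <= be by apply: sqrtr_ge0.
have be2 : be ^+ 2 = B by rewrite sqr_sqrtr.
have ube : u <= be by apply: sq_le_of => //; rewrite be2.
set tT := tfrob T.
have htT : tT <= u * u * u * s.
  rewrite /tT (@tfrob_ext _ _ T (mlmul3 U U U (@Idt R r))); last first.
    by move=> i j k; rewrite hT cubesE.
  have -> : s = tfrob (@Idt R r) by rewrite /tfrob -/(tf2 _) tf2_Idt.
  exact: ML.
set t' := tfrob T'.
have t'0 : 0 <= t' by apply: tfrob_ge0.
have ht' : t' <= tT + e.
  rewrite /t' (@tfrob_ext _ _ T' (tsub T (tsub T T'))); first exact: tfrob_sub.
  by move=> i j k; rewrite /tsub; ring.
have hL : tfrob (tsub (mlmul (cconjmx P) T) (mlmul (cconjmx P') T')) <=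
    p * p * p * e + d * p * p * t' + q * d * p * t' + q * q * d * t'.
  rewrite (tfrob_ext (decompE P P' T T')).
  apply: le_trans (tfrob_add _ _) _; apply: lerD; last exact: ML.
  apply: le_trans (tfrob_add _ _) _; apply: lerD; last exact: ML.
  apply: le_trans (tfrob_add _ _) _; apply: lerD; exact: ML.
apply: le_trans hL _.
rewrite hp -s2 -be2; rewrite -s2 in d2 q2.
have [r0|rpos] := posnP r.
  have hs0 : s = 0.
    by apply/eqP; rewrite -sqrf_eq0 s2 r0.
  have hd0 : d = 0 by move: d2; rewrite hs0 expr0n /= mul0r => h; apply/eqP; rewrite -sqrf_eq0 eq_le h sqr_ge0.
  rewrite hs0 hd0; lra.
have s1 : 1 <= s.
  apply: sq_le_of => //; rewrite s2 expr1n ler1n //.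
have eps0 : 0 <= eps1.
  have h0 := opnorm_ub (P - P') (@vnorm_delta R r (Ordinal rpos)).
  exact: (le_trans (le_trans (sqrtr_ge0 _) h0) hop).
have se0 : 0 <= s * eps1 by apply: mulr_ge0.
have hd : d <= s * eps1 by apply: sq_le_of => //; rewrite exprMn.
have hq : q <= 2%:R * s.
  apply: sq_le_of => //; first by apply: mulr_ge0.
  apply: le_trans q2 _.
  have : eps1 ^+ 2 <= 1 by rewrite expr2; nra.
  have := sqr_ge0 s. nra.
have h1 : q * d <= (2%:R * s) * (s * eps1) by apply: ler_pM.
have h2 : q * q <= (2%:R * s) * (2%:R * s) by apply: ler_pM.
have h3 : q * q * d <= (2%:R * s) * (2%:R * s) * (s * eps1).
  by apply: ler_pM => //; apply: mulr_ge0.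
have sp : 0 < s by apply: lt_le_trans s1.
have h4 : d * s * s <= (s * eps1) * s * s by rewrite !ler_pM2r.
have h5 : q * d * s <= (2%:R * s) * (s * eps1) * s by rewrite ler_pM2r.
set K := d * s * s + q * d * s + q * q * d.
have K0 : 0 <= K by rewrite /K !addr_ge0 // !mulr_ge0.
have hK : K <= 7%:R * (s ^+ 3 * eps1) by rewrite /K; lra.
have hu3 : u * u * u <= be * be * be by rewrite !ler_pM // mulr_ge0.
have ht2 : t' <= be * be * be * s + delta.
  apply: (le_trans ht'); apply: lerD => //; apply: (le_trans htT); rewrite ler_pM2r //.
have hKt : K * t' <= 7%:R * (s ^+ 3 * eps1) * (be * be * be * s + delta) by apply: ler_pM.
have s47 : s ^+ 4 <= s ^+ 7.
  have : 1 <= s ^+ 3 by rewrite exprn_ege1.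
  have -> : s ^+ 7 = s ^+ 4 * s ^+ 3 by rewrite -exprD.
  have := exprn_ge0 4 s0. nra.
have he : e <= delta := hE.
have E1 : s * s * s * e + d * s * s * t' + q * d * s * t' + q * q * d * t' =
   s ^+ 3 * e + K * t' by rewrite /K; ring.
have E2 : 7%:R * eps1 * (s ^+ 2 ^+ 3 * s) * (be ^+ 2 * be) + 8%:R * delta * (s ^+ 2 * s)
   = 7%:R * ((eps1 * (be * be * be)) * s ^+ 7) + 8%:R * (s ^+ 3 * delta) by ring.
have A2 : 7%:R * (s ^+ 3 * eps1) * (be * be * be * s + delta) =
   7%:R * ((eps1 * (be * be * be)) * s ^+ 4) + 7%:R * (eps1 * (s ^+ 3 * delta)) by ring.
have s30 : 0 <= s ^+ 3 by apply: exprn_ge0.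
have A1 : s ^+ 3 * e <= s ^+ 3 * delta by apply: ler_wpM2l.
have A3 : (eps1 * (be * be * be)) * s ^+ 4 <= (eps1 * (be * be * be)) * s ^+ 7.
  by apply: ler_wpM2l => //; rewrite !mulr_ge0.
have A4 : eps1 * (s ^+ 3 * delta) <= s ^+ 3 * delta.
  rewrite -[X in _ <= X]mul1r; apply: ler_wpM2r; first by rewrite mulr_ge0 // (le_trans e0 he).
  exact: ltW.
rewrite E1 E2; rewrite A2 in hKt.
set X1 := s ^+ 3 * e in A1 *; set X2 := K * t' in hKt *.
set Y1 := eps1 * (be * be * be) * s ^+ 4 in A3 hKt *.
set Y2 := eps1 * (be * be * be) * s ^+ 7 in A3 *.
set Z1 := eps1 * (s ^+ 3 * delta) in A4 hKt *.
set Z2 := s ^+ 3 * delta in A1 A4 *.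
lra.
Qed.
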